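(* Let $L$ be a multiplicative lattice and $q$ a proper element of $L$. Then $\sqrt{q}$, $Nil(L)$ and $Jac(L)$ are quasi $n$-absorbing elements of $L$ for all $n\ge2$.
   Context: A multiplicative lattice is a complete lattice $L$ with least element $0$ and compact greatest element $1$, equipped with a commutative, associative product that distributes over arbitrary joins and has $1$ as multiplicative identity. An element $a$ is compact if $a\le\bigvee_{\alpha\in I}a_\alpha$ implies $a\le\bigvee_{\alpha\in I_0}a_\alpha$ for some finite $I_0\subseteq I$; $L_*$ denotes the set of compact elements. A proper element $p$ ($p<1$) is prime if $ab\le p$ with $a,b\in L$ implies $a\le p$ or $b\le p$; a proper element $m$ is maximal if $m<x\le1$ implies $x=1$. For $a\in L$, $\sqrt{a}=\bigwedge\{p: p \text{ prime}, a\le p\}$; $Nil(L)=\sqrt{0}$; $Jac(L)=\bigwedge\{m: m \text{ maximal}\}$. A proper element $q$ is quasi $n$-absorbing if whenever $a^nb\le q$ for some $a,b\in L_*$, then $a^n\le q$ or $a^{n-1}b\le q$. *)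

(* Defs.v *)
From Stdlib Require Import List.

(* Join of an arbitrary set is the primitive; joins of indexed families
   a_alpha (alpha in I) are joins of their ranges. *)
Structure mlattice := MLattice {
  carrier :> Type;
  mle : carrier -> carrier -> Prop;
  mle_refl : forall x, mle x x;
  mle_trans : forall x y z, mle x y -> mle y z -> mle x z;
  mle_antisym : forall x y, mle x y -> mle y x -> x = y;
  msup : (carrier -> Prop) -> carrier;
  msup_ub : forall (S : carrier -> Prop) x, S x -> mle x (msup S);
  msup_least : forall (S : carrier -> Prop) y,
      (forall x, S x -> mle x y) -> mle (msup S) y;
  mmul : carrier -> carrier -> carrier;
  mmulC : forall x y, mmul x y = mmul y x;
  mmulA : forall x y z, mmul x (mmul y z) = mmul (mmul x y) z;
  mmul_sup : forall a (S : carrier -> Prop),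
      mmul a (msup S) = msup (fun y => exists x, S x /\ y = mmul a x);
  mmul_top : forall x, mmul (msup (fun _ => True)) x = x;
  (* the greatest element 1 is compact *)
  mtop_compact : forall (I : Type) (f : I -> carrier),
      mle (msup (fun _ => True)) (msup (fun y => exists i, f i = y)) ->
      exists l : list I,
        mle (msup (fun _ => True)) (msup (fun y => exists i, In i l /\ f i = y))
}.

Arguments mle {m}.
Arguments msup {m}.
Arguments mmul {m}.

Section Defs.
Variable L : mlattice.

Definition mzero : L := msup (fun _ => False).
Definition mtop : L := msup (fun _ => True).

Definition mjoin {I : Type} (f : I -> L) : L := msup (fun y => exists i, f i = y).
Definition minf (S : L -> Prop) : L := msup (fun y => forall x, S x -> mle y x).

Fixpoint mpow (a : L) (n : nat) : L :=
  match n with O => mtop | S k => mmul a (mpow a k) end.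

Definition compact (a : L) : Prop :=
  forall (I : Type) (f : I -> L), mle a (mjoin f) ->
  exists l : list I, mle a (msup (fun y => exists i, In i l /\ f i = y)).

Definition mlt (x y : L) : Prop := mle x y /\ x <> y.
Definition proper (p : L) : Prop := mlt p mtop.

Definition prime (p : L) : Prop :=
  proper p /\ forall a b : L, mle (mmul a b) p -> mle a p \/ mle b p.

Definition maximal (m : L) : Prop :=
  proper m /\ forall x : L, mlt m x -> mle x mtop -> x = mtop.

Definition radical (a : L) : L := minf (fun p => prime p /\ mle a p).
Definition Nil : L := radical mzero.
Definition Jac : L := minf maximal.

Definition quasi_n_absorbing (n : nat) (q : L) : Prop :=
  proper q /\
  forall a b : L, compact a -> compact b ->
    mle (mmul (mpow a n) b) q ->
    mle (mpow a n) q \/ mle (mmul (mpow a (n - 1)) b) q.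
End Defs.

Arguments mzero {L}. Arguments mtop {L}. Arguments proper {L}.
Arguments radical {L}.
Arguments quasi_n_absorbing {L}.

(* Main.v *)
Require Import Defs.
From Stdlib Require Import List Classical ProofIrrelevance Arith Lia.
From mathcomp Require boolp classical_sets.

Section Aux.
Variable L : mlattice.

Lemma le_top (x : L) : mle x mtop.
Proof. apply msup_ub; exact I. Qed.

Lemma mul_mono_r (a x y : L) : mle x y -> mle (mmul a x) (mmul a y).
Proof.
  intros H.
  assert (E : y = msup (fun z => z = x \/ z = y)).
  { apply mle_antisym. apply msup_ub; auto.
    apply msup_least. intros z [-> | ->]; auto using mle_refl. }
  rewrite E, mmul_sup. apply msup_ub. exists x; split; auto.
Qed.

Lemma mul_le_l (a b : L) : mle (mmul a b) a.
Proof.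
  apply mle_trans with (mmul a mtop). apply mul_mono_r, le_top.
  rewrite mmulC. unfold mtop. rewrite mmul_top. apply mle_refl.
Qed.

Lemma mul_le_r (a b : L) : mle (mmul a b) b.
Proof. rewrite mmulC. apply mul_le_l. Qed.

Lemma pow_le (a : L) k : 1 <= k -> mle (mpow L a k) a.
Proof. intros H. destruct k. lia. simpl. apply mul_le_l. Qed.

Lemma prime_step (p a b : L) n : prime L p -> 2 <= n ->
  mle (mmul (mpow L a n) b) p -> mle (mmul (mpow L a (n - 1)) b) p.
Proof.
  intros [_ Hp] Hn H. destruct n as [|k]. lia. simpl mpow in H.
  rewrite <- mmulA in H. replace (S k - 1) with k by lia.
  destruct (Hp _ _ H) as [Ha | Hb]; auto.
  apply mle_trans with (mpow L a k). apply mul_le_l.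
  apply mle_trans with a; auto. apply pow_le. lia.
Qed.

Lemma minf_le (S : L -> Prop) p : S p -> mle (minf L S) p.
Proof. intros Hp. apply msup_least. intros x Hx. apply Hx, Hp. Qed.

Lemma meet_qna (S : L -> Prop) n :
  (forall p, S p -> prime L p) -> (exists p, S p) -> 2 <= n ->
  quasi_n_absorbing n (minf L S).
Proof.
  intros HS [p0 Hp0] Hn. split.
  - split. apply le_top. intros E.
    destruct (HS _ Hp0) as [[_ Hne] _]. apply Hne.
    apply mle_antisym. apply le_top. rewrite <- E. apply minf_le; auto.
  - intros a b _ _ H. right. apply msup_ub. intros p Hp.
    apply (prime_step p a b n); auto. apply mle_trans with (minf L S); auto.
    apply minf_le; auto.
Qed.

Lemma max_prime (m : L) : maximal L m -> prime L m.
Proof.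
  intros [Hm Hmax]. split; auto. intros a b H.
  destruct (classic (mle a m)) as [Ha | Ha]; auto. right.
  set (j := msup (fun z => z = m \/ z = a)).
  assert (Hj : j = mtop).
  { apply Hmax. split. apply msup_ub; auto.
    intros E. apply Ha. rewrite E. apply msup_ub; auto. apply le_top. }
  replace b with (mmul j b).
  - rewrite mmulC. unfold j. rewrite mmul_sup. apply msup_least.
    intros y [x [[-> | ->] ->]]. apply mul_le_r. rewrite mmulC; auto.
  - rewrite Hj. apply mmul_top.
Qed.

Definition Tq (q : L) := {x : L | mle q x /\ x <> mtop}.

Lemma sig_eq q (s t : Tq q) : proj1_sig s = proj1_sig t -> s = t.
Proof.
  destruct s as [s Hs], t as [t Ht]. simpl. intros ->. f_equal.
  apply proof_irrelevance.
Qed.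

Lemma exists_max (q : L) : proper q -> exists m, maximal L m /\ mle q m.
Proof.
  intros [_ Hq].
  pose (R := fun s t : Tq q => boolp.asbool (mle (proj1_sig s) (proj1_sig t))).
  destruct (@classical_sets.Zorn (Tq q) R) as [t Ht].
  - intros t. apply boolp.asboolT, mle_refl.
  - intros r s t H1 H2. apply boolp.asboolT.
    apply boolp.asboolW in H1. apply boolp.asboolW in H2. eapply mle_trans; eauto.
  - intros s t H1 H2. apply sig_eq, mle_antisym; apply boolp.asboolW; auto.
  - intros A Htot.
    pose (C := fun y : L => y = q \/ exists s, A s /\ proj1_sig s = y).
    assert (HC : forall y, C y -> mle q y /\ y <> mtop).
    { intros y [-> | [s [_ <-]]]. split; auto. apply mle_refl. apply (proj2_sig s). }
    assert (Htc : forall y z, C y -> C z -> mle y z \/ mle z y).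
    { intros y z Hy Hz. destruct Hy as [-> | [s [Hs <-]]].
      left. apply HC; auto.
      destruct Hz as [-> | [t [Ht <-]]]. right. apply (proj2_sig s).
      destruct (Htot s t Hs Ht) as [H | H]; apply boolp.asboolW in H; auto. }
    assert (Hu : mle q (msup C) /\ msup C <> mtop).
    { split. apply msup_ub. left; auto.
      intros E.
      destruct (mtop_compact L {y | C y} (@proj1_sig _ _)) as [l Hl].
      { change (msup (fun _ => True)) with (@mtop L). rewrite <- E.
        apply msup_least. intros y Hy. apply msup_ub.
        exists (exist _ y Hy). reflexivity. }
      assert (Hc : forall l' : list {y | C y}, exists c, C c /\ forall i, In i l' -> mle (proj1_sig i) c).
      { induction l' as [|i l' IH].
        - exists q. split. left; auto. intros i [].
        - destruct IH as [c [Hc Hle]].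
          destruct (Htc (proj1_sig i) c (proj2_sig i) Hc) as [H | H].
          + exists c. split; auto. intros j [<- | Hj]; auto.
          + exists (proj1_sig i). split. apply (proj2_sig i).
            intros j [<- | Hj]. apply mle_refl. eapply mle_trans; eauto. }
      destruct (Hc l) as [c [Hc1 Hc2]].
      apply (proj2 (HC c Hc1)). apply mle_antisym. apply le_top.
      eapply mle_trans. apply Hl. apply msup_least. intros y [i [Hi <-]]. auto. }
    exists (exist _ (msup C) Hu). intros s Hs. apply boolp.asboolT. simpl.
    apply msup_ub. right. exists s; auto.
  - exists (proj1_sig t). split.
    + split. split. apply le_top. apply (proj2_sig t).
      intros x [Htx Hne] _.
      destruct (classic (x = mtop)) as [E | E]; auto. exfalso.
      assert (Hx : mle q x /\ x <> mtop).
      { split; auto. eapply mle_trans. apply (proj2_sig t). auto. }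
      assert (HR : R t (exist _ x Hx) = true) by (apply boolp.asboolT; exact Htx). specialize (Ht _ HR).
      apply Hne. rewrite <- Ht. reflexivity.
    + apply (proj2_sig t).
Qed.
End Aux.

Theorem mainTheorem6 (L : mlattice) (q : L) (hq : proper q) :
  forall n : nat, 2 <= n ->
    quasi_n_absorbing n (radical q) /\
    quasi_n_absorbing n (Nil L) /\
    quasi_n_absorbing n (Jac L).
Proof.
  intros n Hn. destruct (exists_max L q hq) as [m [Hm Hqm]].
  split; [|split].
  - apply meet_qna; auto. intros p [Hp _]; auto. exists m; split; auto. apply max_prime; auto.
  - apply meet_qna; auto. intros p [Hp _]; auto. exists m; split. apply max_prime; auto.
    apply msup_least. intros x [].
  - apply meet_qna; auto. apply max_prime. exists m; auto.
Qed.
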